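(* Let $f_\theta$ be a model. For every $f^*\in\mathcal F$, $O_{f_\theta}(f^* )=\operatorname{rank}_{f_\theta}(f^* )$.
   Context: A model is a map $f:\mathbb R^d\times\mathbb R^M\to\mathbb R$, $(x,\theta)\mapsto f(x;\theta)=f_\theta(x)$, differentiable in both $x$ and $\theta$; its function space is $\mathcal F=\{f_\theta:\theta\in\mathbb R^M\}$. The loss $\ell:\mathbb R\times\mathbb R\to[0,\infty)$ is continuously differentiable with $\ell(u,v)=0$ iff $u=v$. For $f^*\in\mathcal F$, the target set is $\mathcal M_{f^*}=\{\theta: f_\theta=f^*\}$. A dataset from $f^*$ of size $n$ is $S=\{(x_i,f^*(x_i))\}_{i=1}^n$; the empirical loss of $g:\mathbb R^d\to\mathbb R$ is $\frac1n\sum_{i=1}^n\ell(g(x_i),f^*(x_i))$ (identically $0$ if $n=0$). The tangent function hyperplane at $\theta'$ is $\widetilde{\mathcal T}_{\theta'}=\{f(\cdot;\theta')+a^\top\nabla_\theta f(\cdot;\theta'):a\in\mathbb R^M\}$. $f^*$ has LLR-guarantee at $\theta'\in\mathcal M_{f^*}$ from $S$ if the set of minimizers of the empirical loss over $\widetilde{\mathcal T}_{\theta'}$ is exactly $\{f^*\}$; $f^*$ has $n$-sample LLR-guarantee if there exist a dataset $S$ from $f^*$ of size $n$ and $\theta'\in\mathcal M_{f^*}$ such that $f^*$ has LLR-guarantee at $\theta'$ from $S$. The optimistic sample size $O_{f_\theta}(f^* )$ is the smallest $n\geq 0$ such that $f^*$ has $n$-sample LLR-guarantee. The model rank at $\theta$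 is $\operatorname{rank}_{f_\theta}(\theta)=\dim\operatorname{span}\{\partial_{\theta_i}f(\cdot;\theta)\}_{i=1}^M$, and the model rank of $f^*$ is $\operatorname{rank}_{f_\theta}(f^* )=\min_{\theta'\in\mathcal M_{f^*}}\operatorname{rank}_{f_\theta}(\theta')$. *)

(* Defs.v *)
From HB Require Import structures.
From mathcomp Require Import all_boot all_order all_algebra.
From mathcomp Require Import all_classical all_reals all_analysis.
Set Implicit Arguments. Unset Strict Implicit. Unset Printing Implicit Defensive.
Import Order.TTheory GRing.Theory Num.Theory.
Import numFieldNormedType.Exports.
Local Open Scope ring_scope.

Section LLR.
Variable R : realType.

Definition is_model (d M : nat) (f : 'rV[R]_d -> 'rV[R]_M -> R) : Prop :=
  forall (x : 'rV[R]_d) (th : 'rV[R]_M),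
    differentiable (fun p : 'rV[R]_d * 'rV[R]_M => f p.1 p.2) (x, th).

Definition is_loss (l : R -> R -> R) : Prop :=
  [/\ forall u v, 0 <= l u v,
      forall u v, l u v = 0 <-> u = v,
      forall p : R * R, differentiable (fun q : R * R => l q.1 q.2) p &
      forall v : R * R, continuous (fun p : R * R => derive (fun q : R * R => l q.1 q.2) p v)].

Definition pderiv (d M : nat) (f : 'rV[R]_d -> 'rV[R]_M -> R)
  (th : 'rV[R]_M) (i : 'I_M) : 'rV[R]_d -> R :=
  fun x => derive (f x) th (delta_mx 0 i).

Definition fth (d M : nat) (f : 'rV[R]_d -> 'rV[R]_M -> R) (th : 'rV[R]_M)
  : 'rV[R]_d -> R := fun x => f x th.

Definition target_set (d M : nat) (f : 'rV[R]_d -> 'rV[R]_M -> R)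
  (fstar : 'rV[R]_d -> R) : set 'rV[R]_M := [set th | fth f th = fstar].

(* empirical loss of g on the dataset {(xs i, fstar (xs i))}_{i<n};
   for n = 0 this is 0 (0^-1 = 0 and the empty sum is 0). *)
Definition emp_loss (d n : nat) (l : R -> R -> R) (xs : 'I_n -> 'rV[R]_d)
  (fstar g : 'rV[R]_d -> R) : R :=
  (n%:R)^-1 * \sum_(i < n) l (g (xs i)) (fstar (xs i)).

Definition tangent_hyperplane (d M : nat) (f : 'rV[R]_d -> 'rV[R]_M -> R)
  (th : 'rV[R]_M) : set ('rV[R]_d -> R) :=
  [set g | exists a : 'rV[R]_M,
     g = fun x => f x th + \sum_(i < M) a 0 i * pderiv f th i x].

Definition LLR_guarantee (d M n : nat) (f : 'rV[R]_d -> 'rV[R]_M -> R)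
  (l : R -> R -> R) (fstar : 'rV[R]_d -> R) (th : 'rV[R]_M)
  (xs : 'I_n -> 'rV[R]_d) : Prop :=
  forall g : 'rV[R]_d -> R,
    (tangent_hyperplane f th g /\
     forall h, tangent_hyperplane f th h ->
       emp_loss l xs fstar g <= emp_loss l xs fstar h)
    <-> g = fstar.

(* n-sample LLR-guarantee; a dataset of size n is n distinct inputs *)
Definition n_sample_LLR (d M : nat) (f : 'rV[R]_d -> 'rV[R]_M -> R)
  (l : R -> R -> R) (fstar : 'rV[R]_d -> R) (n : nat) : Prop :=
  exists (xs : 'I_n -> 'rV[R]_d) (th : 'rV[R]_M),
    injective xs /\ target_set f fstar th /\ LLR_guarantee f l fstar th xs.

Definition is_optimistic_sample_size (d M : nat) (f : 'rV[R]_d -> 'rV[R]_M -> R)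
  (l : R -> R -> R) (fstar : 'rV[R]_d -> R) (n : nat) : Prop :=
  n_sample_LLR f l fstar n /\ forall m, n_sample_LLR f l fstar m -> (n <= m)%N.

(* r = dim span {pderiv f th i}_{i<M} (in the space of functions R^d -> R):
   there is a basis b_1..b_r of that span *)
Definition rank_at (d M : nat) (f : 'rV[R]_d -> 'rV[R]_M -> R)
  (th : 'rV[R]_M) (r : nat) : Prop :=
  exists b : 'I_r -> ('rV[R]_d -> R),
    [/\ forall j, exists c : 'I_M -> R,
          b j = fun x => \sum_(i < M) c i * pderiv f th i x,
        forall i, exists c : 'I_r -> R,
          pderiv f th i = fun x => \sum_(j < r) c j * b j x &
        forall c : 'I_r -> R,
          (forall x, \sum_(j < r) c j * b j x = 0) -> forall j, c j = 0].

Definition is_model_rank (d M : nat) (f : 'rV[R]_d -> 'rV[R]_M -> R)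
  (fstar : 'rV[R]_d -> R) (r : nat) : Prop :=
  (exists th, target_set f fstar th /\ rank_at f th r) /\
  forall th r', target_set f fstar th -> rank_at f th r' -> (r <= r')%N.

End LLR.

(* Main.v *)
Require Import Defs.
From HB Require Import structures.
From mathcomp Require Import all_boot all_order all_algebra.
From mathcomp Require Import all_classical all_reals all_analysis.
Set Implicit Arguments. Unset Strict Implicit. Unset Printing Implicit Defensive.
Import Order.TTheory GRing.Theory Num.Theory.
Local Open Scope ring_scope.

Section Lin.
Variables (R : fieldType) (X : Type) (xdef : X).

Definition inspan (m : nat) (p : nat -> X -> R) (g : X -> R) :=
  exists c : nat -> R, g = fun x => \sum_(i < m) c i * p i x.

Lemma inspan_ext m p g h : (forall x, g x = h x) -> inspan m p h -> inspan m p g.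
Proof. by move=> e [c hc]; exists c; apply: funext => x; rewrite e hc. Qed.

Lemma inspan0 m p : inspan m p (fun _ => 0).
Proof. by exists (fun _ => 0); apply: funext => x; rewrite big1 // => i _; rewrite mul0r. Qed.

Lemma inspanD m p g h : inspan m p g -> inspan m p h ->
  inspan m p (fun x => g x + h x).
Proof.
move=> [c ->] [e ->]; exists (fun i => c i + e i); apply: funext => x.
by rewrite -big_split; apply: eq_bigr => i _; rewrite mulrDl.
Qed.

Lemma inspanZ m p a g : inspan m p g -> inspan m p (fun x => a * g x).
Proof.
move=> [c ->]; exists (fun i => a * c i); apply: funext => x.
by rewrite mulr_sumr; apply: eq_bigr => i _; rewrite mulrA.
Qed.

Lemma inspan_lin m p r (b : nat -> X -> R) (a : nat -> R) :
  (forall j, (j < r)%N -> inspan m p (b j)) ->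
  inspan m p (fun x => \sum_(j < r) a j * b j x).
Proof.
elim: r => [|r IH] H.
  by apply: (inspan_ext _ (inspan0 m p)) => x; rewrite big_ord0.
apply: (inspan_ext (h := fun x => \sum_(j < r) a j * b j x + a r * b r x)).
  by move=> x; rewrite big_ord_recr.
apply: inspanD; first by apply: IH => j hj; apply: H; apply: ltnW.
by apply: inspanZ; apply: H.
Qed.

Lemma sum_delta r k (F : nat -> R) : (k < r)%N ->
  \sum_(j < r) ((j : nat) == k)%:R * F j = F k.
Proof.
move=> hk; rewrite (bigD1 (Ordinal hk)) //= eqxx mul1r big1 ?addr0 //.
move=> j hj; rewrite (_ : ((j : nat) == k) = false) ?mul0r //.
apply/negbTE; apply: contra hj => /eqP e; apply/eqP/val_inj => /=; exact: e.
Qed.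

Lemma inspan_gen m p i : (i < m)%N -> inspan m p (p i).
Proof.
move=> hi; exists (fun j => (j == i)%:R); apply: funext => x.
by rewrite (sum_delta (fun j => p j x)).
Qed.

Lemma inspan_trans m p s q g : (forall i, (i < m)%N -> inspan s q (p i)) ->
  inspan m p g -> inspan s q g.
Proof. by move=> H [c ->]; apply: inspan_lin. Qed.

Lemma inspanS m p g : inspan m p g -> inspan m.+1 p g.
Proof.
apply: inspan_trans => i hi; apply: inspan_gen; exact: ltnW.
Qed.

Lemma basis_pts (p : nat -> X -> R) M : exists r (b : nat -> X -> R) (xs : nat -> X),
 [/\ forall j, (j < r)%N -> inspan M p (b j),
     forall i, (i < M)%N -> inspan r b (p i) &
     forall j k, (j < r)%N -> (k < r)%N -> b j (xs k) = (j == k)%:R ].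
Proof.
elim: M => [|M [r [b [xs [H1 H2 H3]]]]].
  by exists 0%N, (fun _ _ => 0), (fun _ => xdef) => //.
set q := p M.
pose g x := q x - \sum_(j < r) q (xs j) * b j x.
have hg0 k : (k < r)%N -> g (xs k) = 0.
  move=> hk; rewrite /g.
  rewrite (eq_bigr (fun j : 'I_r => ((j : nat) == k)%:R * q (xs j))); last first.
    by move=> j _; rewrite H3 // mulrC.
  by rewrite (sum_delta (fun j => q (xs j))) // subrr.
have hbS j : (j < r)%N -> inspan M.+1 p (b j) by move=> hj; apply: inspanS; apply: H1.
have hq : inspan M.+1 p q by apply: inspan_gen.
case: (pselect (exists x, g x != 0)) => [[x0 hx0]|nex]; last first.
  have gx x : g x = 0.
    by apply/eqP; apply/negPn/negP => h; apply: nex; exists x.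
  exists r, b, xs; split => //.
  move=> i; rewrite ltnS leq_eqVlt => /orP [/eqP ->|hi]; last exact: H2.
  exists (fun j => q (xs j)); apply: funext => x.
  by move: (gx x); rewrite /g => /eqP; rewrite subr_eq0 => /eqP.
pose gn x := (g x0)^-1 * g x.
have gnx0 : gn x0 = 1 by rewrite /gn mulVf.
have gnxs k : (k < r)%N -> gn (xs k) = 0 by move=> hk; rewrite /gn hg0 // mulr0.
have gnS : inspan M.+1 p gn.
  apply: (inspan_ext (h := fun x => (g x0)^-1 * (q x + (-1) * \sum_(j < r) q (xs j) * b j x))).
    by move=> x; rewrite /gn /g mulN1r.
  apply: inspanZ; apply: inspanD => //; apply: inspanZ; exact: (inspan_lin (fun j => q (xs j)) hbS).
pose b' k := if (k < r)%N then (fun x => b k x - b k x0 * gn x) else gn.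
pose xs' k := if (k < r)%N then xs k else x0.
have b'r : b' r = gn by rewrite /b' ltnn.
have hb j : (j < r)%N -> inspan r.+1 b' (b j).
  move=> hj; apply: (inspan_ext (h := fun x => b' j x + b j x0 * b' r x)).
    by move=> x; rewrite b'r /b' hj subrK.
  apply: inspanD; first by apply: inspan_gen; apply: ltnW.
  by apply: inspanZ; apply: inspan_gen.
exists r.+1, b', xs'; split.
- move=> j hj; have [hjr|hjr] := ltnP j r.
    apply: (inspan_ext (h := fun x => b j x + (- b j x0) * gn x)).
      by move=> x; rewrite /b' hjr mulNr.
    by apply: inspanD; [apply: hbS | apply: inspanZ].
  have -> : j = r by apply/eqP; rewrite eqn_leq hjr andbT -ltnS.
  by rewrite b'r.
- move=> i; rewrite ltnS leq_eqVlt => /orP [/eqP ->|hi].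
    apply: (inspan_ext (h := fun x => g x0 * b' r x + \sum_(j < r) q (xs j) * b j x)).
      by move=> x; rewrite b'r /gn mulrA mulfV // mul1r /g subrK.
    apply: inspanD; first by apply: inspanZ; apply: inspan_gen.
    exact: (inspan_lin (fun j => q (xs j)) hb).
  by apply: inspan_trans (H2 i hi).
- move=> j k hj hk.
  have [hjr|hjr] := ltnP j r; have [hkr|hkr] := ltnP k r.
  + by rewrite /b' /xs' hjr hkr gnxs // mulr0 subr0 H3.
  + have -> : k = r by apply/eqP; rewrite eqn_leq hkr andbT -ltnS.
    by rewrite /b' /xs' hjr ltnn gnx0 mulr1 subrr (ltn_eqF hjr).
  + have -> : j = r by apply/eqP; rewrite eqn_leq hjr andbT -ltnS.
    by rewrite b'r /xs' hkr gnxs // eq_sym (ltn_eqF hkr).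
  + have -> : j = r by apply/eqP; rewrite eqn_leq hjr andbT -ltnS.
    have -> : k = r by apply/eqP; rewrite eqn_leq hkr andbT -ltnS.
    by rewrite b'r /xs' ltnn gnx0 eqxx.
Qed.

End Lin.

Section Main.
Variables (R : realType) (d M : nat) (f : 'rV[R]_d -> 'rV[R]_M -> R).
Local Notation X := 'rV[R]_d.

Definition ext (T : Type) (m : nat) (t0 : T) (F : 'I_m -> T) (k : nat) : T :=
  odflt t0 (omap F (insub k)).

Lemma ext_val (T : Type) m t0 (F : 'I_m -> T) (i : 'I_m) : ext t0 F (val i) = F i.
Proof. by rewrite /ext valK. Qed.

Definition P th : nat -> X -> R := ext (fun _ => 0) (pderiv f th).

Lemma sum_ext m (c : nat -> R) (F : 'I_m -> X -> R) x :
  \sum_(i < m) c i * ext (fun _ => 0) F i x = \sum_(i < m) c i * F i x.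
Proof. by apply: eq_bigr => i _; rewrite ext_val. Qed.

Definition Cond th n (xs : 'I_n -> X) := forall a : 'rV[R]_M,
  (forall k, \sum_(i < M) a 0 i * pderiv f th i (xs k) = 0) ->
  forall x, \sum_(i < M) a 0 i * pderiv f th i x = 0.

Lemma inspanP th g : inspan M (P th) g ->
  exists a : 'rV[R]_M, g = fun x => \sum_(i < M) a 0 i * pderiv f th i x.
Proof.
move=> [c ->]; exists (\row_i c i); apply: funext => x.
by rewrite sum_ext; apply: eq_bigr => i _; rewrite mxE.
Qed.

Lemma LLR_iff (l : R -> R -> R) (hl : is_loss l) fstar th n (xs : 'I_n -> X) :
  fth f th = fstar -> (LLR_guarantee f l fstar th xs <-> Cond th xs).
Proof.
move=> hfs; have fs x : fstar x = f x th by rewrite -hfs.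
case: hl => hl0 hleq _ _.
have ll u : l u u = 0 by apply/hleq.
have tan_fs : tangent_hyperplane f th fstar.
  exists 0; apply: funext => x; rewrite big1 ?addr0 ?fs // => i _.
  by rewrite mxE mul0r.
have el_fs : emp_loss l xs fstar fstar = 0.
  by rewrite /emp_loss big1 ?mulr0 // => i _; apply: ll.
have el_ge0 h : 0 <= emp_loss l xs fstar h.
  by rewrite /emp_loss mulr_ge0 // ?invr_ge0 ?ler0n // sumr_ge0.
split.
- move=> H a hv x.
  pose g := fun x => f x th + \sum_(i < M) a 0 i * pderiv f th i x.
  have hg : g = fstar.
    apply/(H g); split; first by exists a.
    move=> h _; rewrite (_ : emp_loss l xs fstar g = 0) //.
    rewrite /emp_loss big1 ?mulr0 // => k _.
    by rewrite /g hv addr0 -fs ll.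
  move: (congr1 (fun F => F x) hg); rewrite /g /= fs => e.
  by rewrite -(addKr (f x th) (\sum_(i < M) _)) e addNr.
- move=> C g; split.
  + move=> [[a ->] hmin]; apply: funext => x; rewrite fs.
    suff -> : \sum_(i < M) a 0 i * pderiv f th i x = 0 by rewrite addr0.
    apply: (C a) => k.
    have n0 : (0 < n)%N := leq_ltn_trans (leq0n k) (ltn_ord k).
    have e0 : emp_loss l xs fstar (fun x => f x th + \sum_(i < M) a 0 i * pderiv f th i x) = 0.
      by apply: le_anti; rewrite el_ge0 andbT -[X in _ <= X]el_fs hmin.
    have hn : (n%:R : R)^-1 != 0 by rewrite invr_eq0 pnatr_eq0 -lt0n.
    move/eqP: e0; rewrite /emp_loss mulf_eq0 (negbTE hn) /= => /eqP e0.
    have := psumr_eq0P (fun i _ => hl0 _ _) e0 (i := k) isT.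
    move/hleq; rewrite fs => e.
    by rewrite -(addKr (f (xs k) th) (\sum_(i < M) _)) e addNr.
  + move=> ->; split => // h _; rewrite el_fs; exact: el_ge0.
Qed.

Section Lag.
Variables (th : 'rV[R]_M) (r : nat) (b : nat -> X -> R) (ys : nat -> X).
Hypotheses (H1 : forall j, (j < r)%N -> inspan M (P th) (b j))
  (H2 : forall i, (i < M)%N -> inspan r b (P th i))
  (H3 : forall j k, (j < r)%N -> (k < r)%N -> b j (ys k) = (j == k)%:R).

Lemma lag_coef (c : nat -> R) k : (k < r)%N ->
  \sum_(j < r) c j * b j (ys k) = c k.
Proof.
move=> hk; rewrite -(sum_delta c hk); apply: eq_bigr => j _.
by rewrite H3 // mulrC.
Qed.

Lemma lag_zero g : inspan r b g -> (forall k, (k < r)%N -> g (ys k) = 0) ->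
  forall x, g x = 0.
Proof.
move=> [c ->] hz x /=; rewrite big1 // => j _.
by move: (hz j (ltn_ord j)); rewrite lag_coef // => ->; rewrite mul0r.
Qed.

Lemma L1 : rank_at f th r.
Proof.
exists (fun j => b j); split.
- move=> j; case: (inspanP (H1 (ltn_ord j))) => a ->.
  by exists (fun i => a 0 i).
- move=> i; case: (H2 (ltn_ord i)) => c hc.
  exists (fun j => c j); rewrite -hc /P ext_val //.
- move=> c hc j.
  move: (hc (ys j)).
  rewrite (eq_bigr (fun k : 'I_r => ext 0 c k * b k (ys j))); last first.
    by move=> k _; rewrite ext_val.
  by rewrite lag_coef // ext_val.
Qed.

Lemma L2 : Cond th (fun k : 'I_r => ys k) /\ injective (fun k : 'I_r => ys k).
Proof.
split.
- move=> a hv; apply: lag_zero.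
    apply: (inspan_trans H2).
    exists (ext 0 (fun i => a 0 i)); apply: funext => x.
    by rewrite sum_ext; apply: eq_bigr => i _; rewrite ext_val.
  by move=> k hk; move: (hv (Ordinal hk)).
- move=> j k /= e; apply/eqP.
  have := H3 (ltn_ord j) (ltn_ord j); rewrite e H3 // eqxx.
  case: (@eqP _ (val j) (val k)) => [/val_inj -> _ //|_ /eqP].
  by rewrite /= eq_sym oner_eq0.
Qed.

Lemma L3 n (xs : 'I_n -> X) : Cond th xs -> (r <= n)%N.
Proof.
move=> C.
pose D : 'M[R]_(r, n) := \matrix_(j, k) b j (xs k).
have : row_free D.
  apply: inj_row_free => v hv.
  pose G := fun x => \sum_(j < r) ext 0 (v 0) j * b j x.
  have GS : inspan M (P th) G by apply: inspan_lin.
  case: (inspanP GS) => a hG.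
  have G0 : forall x, G x = 0.
    have hGx y : G y = \sum_(i < M) a 0 i * pderiv f th i y by rewrite hG.
    move=> x; rewrite hGx; apply: C => k; rewrite -hGx.
    move: (congr1 (fun m : 'M[R]_(1, n) => m 0 k) hv); rewrite !mxE => <-.
    by apply: eq_bigr => j _; rewrite ext_val mxE.
  apply/rowP => k; rewrite mxE -(ext_val 0 (v 0)).
  by rewrite -(lag_coef _ (ltn_ord k)) -/(G (ys k)) G0.
rewrite /row_free => /eqP <-; exact: rank_leq_col.
Qed.

Lemma L4 r' : rank_at f th r' -> (r <= r')%N.
Proof.
case=> B [hB1 hB2 _].
have hp i : (i < M)%N -> inspan r' (ext (fun _ => 0) B) (P th i).
  move=> hi; case: (hB2 (Ordinal hi)) => c hc.
  exists (ext 0 c); rewrite -[i]/(val (Ordinal hi)) /P ext_val hc.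
  by apply: funext => x; rewrite sum_ext; apply: eq_bigr => l _; rewrite ext_val.
pose E : 'M[R]_(r', r) := \matrix_(l, k) B l (ys k).
have : (1%:M <= E)%MS.
  apply/row_subP => j; apply/submxP.
  case: (inspan_trans hp (H1 (ltn_ord j))) => c hc.
  exists (\row_l c l); apply/rowP => k; rewrite !mxE.
  rewrite (_ : (j == k)%:R = b j (ys k)); last by rewrite H3.
  rewrite hc /=; apply: eq_bigr => l _; rewrite !mxE ext_val //.
move/mxrankS; rewrite mxrank1 => h; apply: leq_trans h _; exact: rank_leq_row.
Qed.

End Lag.

End Main.

Theorem mainTheorem4 (R : realType) (d M : nat)
  (f : 'rV[R]_d -> 'rV[R]_M -> R) (l : R -> R -> R)
  (hf : is_model f) (hl : is_loss l)
  (fstar : 'rV[R]_d -> R) (hfstar : exists th : 'rV[R]_M, fth f th = fstar) :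
  exists n : nat,
    is_optimistic_sample_size f l fstar n /\ is_model_rank f fstar n.
Proof.
case: hfstar => th0 hth0.
have S_of th : fth f th = fstar -> exists r, [/\ n_sample_LLR f l fstar r,
   rank_at f th r,
   forall n (xs : 'I_n -> 'rV[R]_d), Cond f th xs -> (r <= n)%N &
   forall r', rank_at f th r' -> (r <= r')%N].
  move=> hth; case: (basis_pts (0 : 'rV[R]_d) (P f th) M) => r [b [ys [H1 H2 H3]]].
  case: (L2 H2 H3) => hC hinj.
  exists r; split.
  - exists (fun k : 'I_r => ys k), th; split => //; split => //.
    exact/(LLR_iff hl _ hth).
  - exact: L1 H1 H2 H3.
  - move=> n xs; have HH := L3 H1 H3; exact: HH.
  - move=> r'; have HH := L4 H1 H3; exact: HH.
have exS : exists m, `[< n_sample_LLR f l fstar m >].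
  by case: (S_of th0 hth0) => r [hr _ _ _]; exists r; apply/asboolP.
case: (ex_minnP exS) => n /asboolP hn hmin.
have hmin' m : n_sample_LLR f l fstar m -> (n <= m)%N.
  by move=> hm; apply: hmin; apply/asboolP.
exists n; split; first by split.
split.
- case: (hn) => xs [th [hinj [hth hg]]].
  have hC := (LLR_iff hl xs hth).1 hg.
  case: (S_of th hth) => r [hr hrk h3 _].
  have e : r = n by apply/eqP; rewrite eqn_leq (h3 _ _ hC) hmin'.
  by exists th; split => //; rewrite -e.
- move=> th r' hth hrk'; case: (S_of th hth) => r [hr _ _ h4].
  exact: leq_trans (hmin' _ hr) (h4 _ hrk').
Qed.
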